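(* Let $\mathcal{E}=\{E_1,\ldots,E_m\}$ be a set of two-outcome measurements and let $T$ be a positive integer. Then there exists a test procedure $Q$ such that: (i) $Q$ takes a state $\rho_0$ as input, applies at most $T$ measurements from $\mathcal{E}$, and returns either ''success'' or ''failure''; (ii) if $\epsilon\ge0$ and $\operatorname{Tr}(E_i\rho_0)\ge1-\epsilon$ for all $i$, then $Q$ succeeds with probability at least $1-T\sqrt{\epsilon}$; (iii) if $Q$ succeeds on input $\rho_0$ with probability at least $\lambda>0$, then conditioned on succeeding, $Q$ outputs a state $\sigma$ such that $\operatorname{Tr}(E_i\sigma)\ge1-2\sqrt{m/(\lambda T)}$ for all $i\in\{1,\ldots,m\}$.
   Context: A two-outcome measurement on a quantum system is a Hermitian operator $E$ with eigenvalues in $[0,1]$; applied to state $\rho$ it accepts with probability $\operatorname{Tr}(E\rho)$ and the state is updated to the corresponding post-measurement state. *)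

(* Defs.v *)
From Stdlib Require Import ClassicalEpsilon.
From mathcomp Require Import all_boot all_order all_algebra.
From mathcomp Require Import reals complex.
Set Implicit Arguments. Unset Strict Implicit. Unset Printing Implicit Defensive.
Import Order.TTheory GRing.Theory Num.Theory.
Local Open Scope ring_scope.
Local Open Scope complex_scope.

Section Quantum.
Variable R : realType.
Local Notation C := (R[i]).

Definition adjmx {d : nat} (A : 'M[C]_d) : 'M[C]_d := (map_mx Num.conj A)^T.

Definition hermitian {d : nat} (A : 'M[C]_d) : Prop := adjmx A = A.

Definition psd {d : nat} (A : 'M[C]_d) : Prop :=
  hermitian A /\ forall a : C, eigenvalue A a -> 0 <= a.

Definition is_state {d : nat} (rho : 'M[C]_d) : Prop :=
  psd rho /\ \tr rho = 1.

Definition is_measurement {d : nat} (E : 'M[C]_d) : Prop :=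
  hermitian E /\ forall a : C, eigenvalue E a -> 0 <= a <= 1.

Definition psd_sqrt {d : nat} (A : 'M[C]_d) : 'M[C]_d :=
  epsilon (inhabits (0 : 'M[C]_d)) (fun S => psd S /\ S *m S = A).

(* Lueders post-measurement (unnormalized) states of the accepting /
   rejecting outcomes of the measurement E on rho. *)
Definition accept_update {d : nat} (E rho : 'M[C]_d) : 'M[C]_d :=
  psd_sqrt E *m rho *m psd_sqrt E.
Definition reject_update {d : nat} (E rho : 'M[C]_d) : 'M[C]_d :=
  psd_sqrt (1%:M - E) *m rho *m psd_sqrt (1%:M - E).

(* Test procedures: adaptive, classically randomized decision trees whose
   internal nodes apply a measurement from the family E : 'I_m -> 'M_d
   (continuing in the accept or reject branch) or flip a biased coin. *)
Inductive proc (m : nat) : Type :=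
| PSucc : proc m
| PFail : proc m
| PMeas : 'I_m -> proc m -> proc m -> proc m
| PMix  : R -> proc m -> proc m -> proc m.

Arguments PSucc {m}. Arguments PFail {m}.

Fixpoint proc_wf {m : nat} (Q : proc m) : Prop :=
  match Q with
  | PSucc | PFail => True
  | PMeas _ a r => proc_wf a /\ proc_wf r
  | PMix p a b => (0 <= p <= 1) /\ proc_wf a /\ proc_wf b
  end.

Fixpoint num_meas {m : nat} (Q : proc m) : nat :=
  match Q with
  | PSucc | PFail => 0
  | PMeas _ a r => (maxn (num_meas a) (num_meas r)).+1
  | PMix _ a b => maxn (num_meas a) (num_meas b)
  end.

(* unnormalized output state on the "success" event *)
Fixpoint succ_op {m d : nat} (E : 'I_m -> 'M[C]_d) (Q : proc m)
    (rho : 'M[C]_d) : 'M[C]_d :=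
  match Q with
  | PSucc => rho
  | PFail => 0
  | PMeas i a r => succ_op E a (accept_update (E i) rho)
                   + succ_op E r (reject_update (E i) rho)
  | PMix p a b => (p%:C) *: succ_op E a rho + (1 - p%:C) *: succ_op E b rho
  end.

Definition succ_prob {m d : nat} (E : 'I_m -> 'M[C]_d) (Q : proc m)
    (rho : 'M[C]_d) : C := \tr (succ_op E Q rho).

Definition succ_state {m d : nat} (E : 'I_m -> 'M[C]_d) (Q : proc m)
    (rho : 'M[C]_d) : 'M[C]_d := (succ_prob E Q rho)^-1 *: succ_op E Q rho.

End Quantum.
Arguments PSucc {R m}. Arguments PFail {R m}.

(* Main.v *)
From Stdlib Require Import ClassicalEpsilon.
Require Import Defs.
From mathcomp Require Import all_boot all_order all_algebra.
From mathcomp Require Import reals complex ring lra.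
Import Order.TTheory GRing.Theory Num.Theory Num.Def.
Set Implicit Arguments. Unset Strict Implicit. Unset Printing Implicit Defensive.
Local Open Scope ring_scope.

Section Mx.
Variable R : realType.
Local Notation C := (R[i]).

Definition adj p q (B : 'M[C]_(p, q)) : 'M[C]_(q, p) := (map_mx conjC B)^T.

Lemma adjmxE d (A : 'M[C]_d) : @adjmx R d A = adj A. Proof. by []. Qed.

Lemma adjM p q r (A : 'M[C]_(p, q)) (B : 'M[C]_(q, r)) :
  adj (A *m B) = adj B *m adj A.
Proof. by rewrite /adj map_mxM trmx_mul. Qed.

Lemma adjK p q (A : 'M[C]_(p, q)) : adj (adj A) = A.
Proof.
by apply/matrixP => i j; rewrite !mxE conjCK.
Qed.

Lemma adjD p q (A B : 'M[C]_(p, q)) : adj (A + B) = adj A + adj B.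
Proof. by apply/matrixP => i j; rewrite !mxE rmorphD. Qed.

Lemma adjN p q (A : 'M[C]_(p, q)) : adj (- A) = - adj A.
Proof. by apply/matrixP => i j; rewrite !mxE rmorphN. Qed.

Lemma adjB p q (A B : 'M[C]_(p, q)) : adj (A - B) = adj A - adj B.
Proof. by rewrite adjD adjN. Qed.

Lemma adjZ p q (a : C) (A : 'M[C]_(p, q)) : adj (a *: A) = a^* *: adj A.
Proof. by apply/matrixP => i j; rewrite !mxE rmorphM. Qed.

Lemma adj1 n : adj (1%:M : 'M[C]_n) = 1%:M.
Proof. by rewrite /adj map_mx1 trmx1. Qed.

Lemma adj_diag n (c : 'rV[C]_n) : adj (diag_mx c) = diag_mx (map_mx conjC c).
Proof. by rewrite /adj map_diag_mx tr_diag_mx. Qed.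

Lemma adj_tstar p q (A : 'M[C]_(p, q)) : adj A = map_mx conjC (A ^T).
Proof. by rewrite /adj map_trmx. Qed.

Lemma tr_adj_ge0 p q (B : 'M[C]_(p, q)) : 0 <= \tr (B *m adj B).
Proof.
rewrite /mxtrace; apply: sumr_ge0 => i _; rewrite !mxE.
by apply: sumr_ge0 => j _; rewrite !mxE mul_conjC_ge0.
Qed.

Definition gram d (X : 'M[C]_d) := exists n (B : 'M[C]_(d, n)), X = B *m adj B.

Lemma gram_tr_ge0 d (X : 'M[C]_d) : gram X -> 0 <= \tr X.
Proof. by case=> n [B ->]; apply: tr_adj_ge0. Qed.

Lemma gram_adj d (X : 'M[C]_d) : gram X -> adj X = X.
Proof. by case=> n [B ->]; rewrite adjM adjK. Qed.

Lemma gram0 d : gram (0 : 'M[C]_d).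
Proof. by exists 0%N, 0; rewrite mul0mx. Qed.

Lemma gramD d (X Y : 'M[C]_d) : gram X -> gram Y -> gram (X + Y).
Proof.
case=> n [B ->] [n' [B' ->]]; exists (n + n')%N, (row_mx B B').
by rewrite /adj map_row_mx tr_row_mx mul_row_col.
Qed.

Lemma gramZ d (a : C) (X : 'M[C]_d) : 0 <= a -> gram X -> gram (a *: X).
Proof.
move=> a0 [n [B ->]]; exists n, (sqrtC a *: B).
rewrite adjZ -scalemxAl -scalemxAr scalerA.
by rewrite (CrealP (ger0_real (introT idP (etrans (sqrtC_ge0 a) a0)))) -expr2 sqrtCK.
Qed.

Lemma gram_sum d I (r : seq I) (P : pred I) (F : I -> 'M[C]_d) :
  (forall i, P i -> gram (F i)) -> gram (\sum_(i <- r | P i) F i).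
Proof.
move=> H; elim/big_rec: _ => [|i x Pi gx]; first exact: gram0.
by apply: gramD => //; apply: H.
Qed.

Lemma gram_conj d d' (K : 'M[C]_(d', d)) (X : 'M[C]_d) :
  gram X -> gram (K *m X *m adj K).
Proof.
case=> n [B ->]; exists n, (K *m B).
by rewrite adjM !mulmxA.
Qed.

Lemma gram_trM_ge0 d (P X : 'M[C]_d) : gram P -> gram X -> 0 <= \tr (P *m X).
Proof.
case=> n [Cm ->] [n' [B ->]].
rewrite -!mulmxA mxtrace_mulC !mulmxA -mulmxA.
have -> : adj Cm *m (B *m adj B) *m Cm = (adj Cm *m B) *m adj (adj Cm *m B).
  by rewrite adjM adjK !mulmxA.
by rewrite tr_adj_ge0.
Qed.

End Mx.


Section Spec.
Variable R : realType.
Local Notation C := (R[i]).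
Variable n : nat.

Definition unit_ok (U : 'M[C]_n) := U *m adj U = 1%:M.

Definition UD (U : 'M[C]_n) (c : 'rV[C]_n) := adj U *m diag_mx c *m U.

Lemma unit_ok_C U : unit_ok U -> adj U *m U = 1%:M.
Proof. by move/mulmx1C. Qed.

Lemma UD_mul U a b : unit_ok U ->
  UD U a *m UD U b = UD U (\row_j (a 0 j * b 0 j)).
Proof.
move=> hU; rewrite /UD -!mulmxA; congr (_ *m _).
by rewrite (mulmxA U) hU mul1mx mulmxA mulmx_diag.
Qed.

Lemma UD_add U a b : UD U a + UD U b = UD U (a + b).
Proof. by rewrite /UD raddfD mulmxDr mulmxDl. Qed.

Lemma UD_opp U a : - UD U a = UD U (- a).
Proof.
rewrite /UD; have -> : diag_mx (- a) = - diag_mx a.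
  by apply/matrixP => i j; rewrite !mxE mulNrn.
by rewrite mulmxN mulNmx.
Qed.

Lemma UD_scale U (k : C) a : k *: UD U a = UD U (k *: a).
Proof.
rewrite /UD; have -> : diag_mx (k *: a) = k *: diag_mx a.
  by apply/matrixP => i j; rewrite !mxE mulrnAr.
by rewrite -scalemxAr -scalemxAl.
Qed.

Lemma UD_one U : unit_ok U -> 1%:M = UD U (const_mx 1).
Proof. by move=> hU; rewrite /UD diag_const_mx mulmx1 unit_ok_C. Qed.

Lemma UD_adj U c : adj (UD U c) = UD U (map_mx conjC c).
Proof. by rewrite /UD !adjM adjK adj_diag mulmxA. Qed.

Lemma UD_eig U c k : unit_ok U -> eigenvalue (UD U c) (c 0 k).
Proof.
move=> hU; apply/eigenvalueP; exists (row k U).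
  rewrite /UD !mulmxA -row_mul hU row1 -rowE row_diag_mx -scalemxAl -rowE.
  by [].
apply/eqP => /(congr1 (mulmx^~ (adj U))).
rewrite -row_mul hU row1 mul0mx => /matrixP /(_ 0 k).
by rewrite !mxE !eqxx /= => /eqP; rewrite oner_eq0.
Qed.


Lemma UD_eig_inv U c a : unit_ok U -> eigenvalue (UD U c) a -> exists k, a = c 0 k.
Proof.
move=> hU /eigenvalueP [v hv v0].
set w := v *m adj U.
have hw : w *m diag_mx c = a *: w.
  rewrite /w scalemxAl -hv /UD !mulmxA -(mulmxA _ U) hU mulmx1.
  by [].
have w0 : w != 0.
  apply: contraNneq v0 => w0.
  by rewrite -[v]mulmx1 -(unit_ok_C hU) mulmxA -/w w0 mul0mx.
have [k wk] : exists k, w 0 k != 0.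
  case: (pickP (fun k => w 0 k != 0)) => [k hk|H]; first by exists k.
  move: w0; suff -> : w = 0 by rewrite eqxx.
  by apply/rowP => k; move/negbFE/eqP: (H k) => ->; rewrite mxE.
exists k; move/matrixP: hw => /(_ 0 k); rewrite mul_mx_diag [LHS]mxE [RHS]mxE mulrC.
by move=> /(mulIf wk).
Qed.

Lemma UD_gram U (c : 'rV[C]_n) : (forall k, 0 <= c 0 k) -> gram (UD U c).
Proof.
move=> hc; exists n, (adj U *m diag_mx (map_mx sqrtC c)).
rewrite adjM adj_diag adjK /UD !mulmxA -[in RHS](mulmxA (adj U)) mulmx_diag.
congr (_ *m diag_mx _ *m _); apply/rowP => k; rewrite !mxE.
have h := hc k; rewrite -[sqrtC _]/(sqrtC (c 0 k)).
by rewrite (CrealP (ger0_real (introT idP (etrans (sqrtC_ge0 _) h)))) -expr2 sqrtCK.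
Qed.

Lemma herm_spectral (A : 'M[C]_n) : adj A = A ->
  exists U c, unit_ok U /\ A = UD U c.
Proof.
move=> hA.
have Ah : A \is hermsymmx.
  apply/is_hermitianmxP; rewrite expr0 scale1r.
  by rewrite -[LHS]hA adj_tstar.
have /orthomx_spectralP hE := hermitian_normalmx Ah.
exists (spectralmx A), (spectral_diag A); split.
  by have /unitarymxP := spectral_unitarymx A; rewrite /unit_ok adj_tstar.
rewrite {1}hE invmx_unitary ?spectral_unitarymx //.
by rewrite /UD adj_tstar.
Qed.

End Spec.


Section Meas.
Variable R : realType.
Local Notation C := (R[i]).
Variable d : nat.

Lemma psd_gram (A : 'M[C]_d) : psd A -> gram A.
Proof.
case=> hA hE; have [U [c [hU hAU]]] := herm_spectral hA.
rewrite hAU; apply: UD_gram => k; apply: hE; rewrite hAU; exact: UD_eig.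
Qed.

Lemma state_gram (rho : 'M[C]_d) : is_state rho -> gram rho.
Proof. by case=> /psd_gram. Qed.

Lemma meas_gram (E : 'M[C]_d) : is_measurement E -> gram E /\ gram (1%:M - E).
Proof.
case=> hA hE; have [U [c [hU hAU]]] := herm_spectral hA.
have hc k : 0 <= c 0 k <= 1 by apply: hE; rewrite hAU; exact: UD_eig.
rewrite hAU.
split; first by apply: UD_gram => k; case/andP: (hc k).
rewrite (UD_one hU) UD_opp UD_add; apply: UD_gram => k.
by rewrite !mxE subr_ge0; case/andP: (hc k).
Qed.

Lemma sqrtC_real (x : C) : 0 <= x -> (sqrtC x)^* = sqrtC x.
Proof. by move=> h; apply/CrealP/ger0_real; rewrite sqrtC_ge0. Qed.

Lemma sqrt_exists (E : 'M[C]_d) : is_measurement E ->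
  exists S, psd S /\ S *m S = E.
Proof.
case=> hA hE; have [U [c [hU hAU]]] := herm_spectral hA.
have hc k : 0 <= c 0 k <= 1 by apply: hE; rewrite hAU; exact: UD_eig.
rewrite hAU.
exists (UD U (map_mx sqrtC c)); split; last first.
  rewrite UD_mul //; congr UD; apply/rowP => k; rewrite !mxE.
  by rewrite -expr2 sqrtCK.
split.
  rewrite /Defs.hermitian adjmxE UD_adj; congr UD; apply/rowP => k; rewrite !mxE.
  by rewrite sqrtC_real //; case/andP: (hc k).
move=> a /(UD_eig_inv hU) [k ->]; rewrite mxE sqrtC_ge0.
by case/andP: (hc k).
Qed.

Lemma psd_sqrt_spec (E : 'M[C]_d) : is_measurement E ->
  psd (psd_sqrt E) /\ psd_sqrt E *m psd_sqrt E = E.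
Proof.
move=> hE; rewrite /psd_sqrt.
by apply: (epsilon_spec (inhabits 0) (fun S => psd S /\ S *m S = E)); apply: sqrt_exists.
Qed.

Lemma sqrt_facts (E : 'M[C]_d) : is_measurement E ->
  let S := psd_sqrt E in
  [/\ adj S = S, S *m S = E &
      gram ((1%:M - E) - (1%:M - S) *m (1%:M - S))].
Proof.
move=> hE S; have [[hS hSe] hSS] := psd_sqrt_spec hE; rewrite -/S in hS hSe hSS.
split => //.
have [V [b [hV hSV]]] := herm_spectral hS.
have hb k : 0 <= b 0 k by apply: hSe; rewrite hSV; exact: UD_eig.
have hb1 k : b 0 k <= 1.
  have : 0 <= b 0 k * b 0 k <= 1.
    case: hE => _ hE; apply: hE; rewrite -hSS hSV UD_mul //.
    by have := UD_eig (\row_j (b 0 j * b 0 j)) k hV; rewrite [X in eigenvalue _ X]mxE.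
  case/andP => _ h.
  by rewrite -(ler_pXn2r (_ : (0 < 2)%N)) ?nnegrE ?hb ?ler01 // expr1n expr2.
rewrite -hSS hSV UD_mul // (UD_one hV) !UD_opp !UD_add UD_mul // UD_opp UD_add.
apply: UD_gram => k; rewrite !mxE.
have -> : 1 - b 0 k * b 0 k - (1 - b 0 k) * (1 - b 0 k) = 2%:R * (b 0 k * (1 - b 0 k)).
  by ring.
by rewrite mulr_ge0 ?ler0n // mulr_ge0 // subr_ge0.
Qed.

End Meas.


Section CS.
Variable R : realType.
Local Notation C := (R[i]).

Lemma tr_adj_dot p q (X Y : 'M[C]_(p, q)) :
  \tr (adj X *m Y) = dotmx (mxvec Y) (mxvec X).
Proof.
rewrite dotmxE mxE.
rewrite (reindex (uncurry (@mxvec_index p q))) /=; last first.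
  exact: curry_mxvec_bij.
rewrite [RHS](_ : _ = \sum_i \sum_j (mxvec Y 0 (mxvec_index i j) *
   (map_mx conjC (trmx (mxvec X))) (mxvec_index i j) 0)); last first.
  by rewrite pair_bigA; apply: eq_bigr => -[i j] _.
rewrite exchange_big /mxtrace; apply: eq_bigr => j _.
rewrite mxE; apply: eq_bigr => i _.
by rewrite !mxE mxvecE mulrC; congr (_ * _); rewrite mxvecE.
Qed.

Lemma frobCS p q (X Y : 'M[C]_(p, q)) :
  `|\tr (adj X *m Y)| ^+ 2 <= \tr (adj X *m X) * \tr (adj Y *m Y).
Proof.
rewrite !tr_adj_dot mulrC.
exact: (CauchySchwarz (@dotmx C (p * q)) (mxvec Y) (mxvec X)).1.
Qed.

End CS.


Section Proc.
Variable R : realType.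
Local Notation C := (R[i]).
Variables (m d : nat) (E : 'I_m -> 'M[C]_d).
Local Notation sop := (succ_op E).

Lemma update_lin (M X Y : 'M[C]_d) a :
  M *m (a *: X + Y) *m M = a *: (M *m X *m M) + M *m Y *m M.
Proof. by rewrite mulmxDr mulmxDl -scalemxAr -scalemxAl. Qed.

Lemma succ_op_lin (Q : proc R m) a X Y : sop Q (a *: X + Y) = a *: sop Q X + sop Q Y.
Proof.
elim: Q X Y => [| |i q IHq r IHr|p q IHq r IHr] X Y /=.
- by [].
- by rewrite scaler0 addr0.
- rewrite /accept_update /reject_update !update_lin IHq IHr scalerDr.
  by rewrite addrACA.
- rewrite IHq IHr !scalerDr !scalerA [_ * a]mulrC [(1 - _) * a]mulrC -!scalerA.
  by rewrite addrACA.
Qed.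

Lemma succ_op0 (Q : proc R m) : sop Q 0 = 0.
Proof.
have := succ_op_lin Q 1 0 0; rewrite addr0 scaler0 scale1r => h.
have h2 : sop Q 0 + sop Q 0 = sop Q 0 + 0 by rewrite addr0 -h.
exact: (addrI _ h2).
Qed.

Lemma succ_opZ (Q : proc R m) a X : sop Q (a *: X) = a *: sop Q X.
Proof. by have := succ_op_lin Q a X 0; rewrite !addr0 succ_op0 addr0. Qed.

Lemma succ_opD (Q : proc R m) X Y : sop Q (X + Y) = sop Q X + sop Q Y.
Proof. by have := succ_op_lin Q 1 X Y; rewrite !scale1r. Qed.

Lemma succ_op_sum (Q : proc R m) I (r : seq I) (F : I -> 'M[C]_d) :
  sop Q (\sum_(i <- r) F i) = \sum_(i <- r) sop Q (F i).
Proof.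
elim: r => [|x r IH]; first by rewrite !big_nil succ_op0.
by rewrite !big_cons succ_opD IH.
Qed.

Fixpoint unif (l : seq (proc R m)) : proc R m :=
  if l is q :: l' then
    (if l' is [::] then q else PMix ((size l)%:R^-1) q (unif l'))
  else PFail.

Lemma unif_op (l : seq (proc R m)) X : (0 < size l)%N ->
  sop (unif l) X = (size l)%:R^-1 *: \sum_(q <- l) sop q X.
Proof.
elim: l => // q l IH _; case: l IH => [|q' l] IH.
  by rewrite /= big_cons big_nil addr0 invr1 scale1r.
rewrite [unif _]/= [sop _ _]/= IH // [in RHS]big_cons scalerDr scalerA.
rewrite fmorphV rmorph_nat; congr (_ + _); congr (_ *: _).
rewrite /=; set k := (size l).+1.
have hk : (k%:R : C) != 0 by rewrite pnatr_eq0.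
have hk1 : (k.+1%:R : C) != 0 by rewrite pnatr_eq0.
rewrite -/k; move: hk1; rewrite -addn1 natrD => hk1.
by field; rewrite hk1 hk.
Qed.


Lemma size_index_enum_ord : size (index_enum 'I_m) = m.
Proof.
by rewrite -[index_enum _](filter_predT) deprecated_filter_index_enum -cardE card_ord.
Qed.

Lemma unif_wf I (s : seq I) (f : I -> proc R m) :
  (forall i, proc_wf (f i)) -> proc_wf (unif (map f s)).
Proof.
move=> hf; elim: s => // x s IH; case: s IH => [|y s] IH /=; first exact: hf.
split; last by split => //; apply: hf.
by rewrite invr_ge0 ler0n /= invf_le1 ?ler1n // ltr0n.
Qed.

Lemma unif_meas (I : eqType) (s : seq I) (f : I -> proc R m) N :
  {in s, forall i, (num_meas (f i) <= N)%N} -> (num_meas (unif (map f s)) <= N)%N.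
Proof.
elim: s => // x s IH hf; case: s IH hf => [|y s] IH hf /=.
  by apply: hf; rewrite mem_head.
rewrite geq_max hf ?mem_head //=; apply: IH => z hz; apply: hf.
by rewrite in_cons hz orbT.
Qed.

Fixpoint nice (Q : proc R m) : Prop :=
  match Q with
  | PSucc | PFail => True
  | PMeas _ a r => nice a /\ r = PFail
  | PMix p a b => (0 <= p <= 1) /\ nice a /\ nice b
  end.

Lemma unif_nice I (s : seq I) (f : I -> proc R m) :
  (forall i, nice (f i)) -> nice (unif (map f s)).
Proof.
move=> hf; elim: s => // x s IH; case: s IH => [|y s] IH /=; first exact: hf.
split; last by split => //; apply: hf.
by rewrite invr_ge0 ler0n /= invf_le1 ?ler1n // ltr0n.
Qed.

Fixpoint rep (s : nat) : proc R m :=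
  if s is s'.+1 then unif [seq PMeas i (rep s') PFail | i <- index_enum 'I_m]
  else PSucc.

Definition Qp (T : nat) : proc R m := unif [seq rep s | s <- iota 0 T].

Lemma rep_meas s : (num_meas (rep s) <= s)%N.
Proof.
elim: s => [|s IH] //; rewrite [rep _]/=.
apply: (@unif_meas _ (index_enum 'I_m) (fun i => PMeas i (rep s) PFail)) => i _ /=.
by rewrite maxn0.
Qed.

Lemma rep_wf s : proc_wf (rep s).
Proof.
elim: s => [|s IH] //; rewrite [rep _]/=.
by apply: (@unif_wf _ (index_enum 'I_m) (fun i => PMeas i (rep s) PFail)).
Qed.

Hypothesis hE : forall i, is_measurement (E i).

Lemma acc_gram i X : gram X -> gram (accept_update (E i) X).
Proof.
move=> gX; have [hS _ _] := sqrt_facts (hE i).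
by rewrite /accept_update -{2}hS; apply: gram_conj.
Qed.

Lemma tr_acc i X : \tr (accept_update (E i) X) = \tr (E i *m X).
Proof.
have [_ hSS _] := sqrt_facts (hE i).
by rewrite /accept_update mxtrace_mulC mulmxA hSS.
Qed.

Lemma nice_gram (Q : proc R m) X : nice Q -> gram X -> gram (sop Q X).
Proof.
elim: Q X => [| |i q IHq r IHr|p q IHq r IHr] X /=.
- by [].
- by move=> _ _; apply: gram0.
- case=> nq -> gX /=; rewrite addr0; apply: IHq => //; exact: acc_gram.
- case=> /andP[p0 p1] [nq nr] gX; apply: gramD; apply: gramZ.
  + by rewrite ler0c.
  + exact: IHq.
  + by rewrite -(rmorph1 (real_complex R)) -rmorphB ler0c subr_ge0.
  + exact: IHr.
Qed.

Hypothesis m0 : (0 < m)%N.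

Lemma rep_op s X :
  sop (rep s.+1) X = m%:R^-1 *: \sum_i sop (rep s) (accept_update (E i) X).
Proof.
rewrite [rep _]/= unif_op size_map size_index_enum_ord //.
by rewrite big_map; congr (_ *: _); apply: eq_bigr => i _ /=; rewrite addr0.
Qed.

Lemma rep_shift s X : sop (rep s.+1) X = sop (rep 1) (sop (rep s) X).
Proof.
elim: s X => [|s IH] X; first by [].
rewrite rep_op (eq_bigr (fun i => sop (rep 1) (sop (rep s) (accept_update (E i) X)))).
  by rewrite -succ_op_sum -succ_opZ -rep_op.
by move=> i _; rewrite IH.
Qed.

Lemma tr_rep1 X : \tr (sop (rep 1) X) = m%:R^-1 * \sum_i \tr (E i *m X).
Proof.
rewrite rep_op mxtraceZ raddf_sum; congr (_ * _); apply: eq_bigr => i _.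
by rewrite /= tr_acc.
Qed.

Lemma rep_nice s : nice (rep s).
Proof.
elim: s => [|s IH] //; rewrite [rep _]/=.
have := @unif_nice 'I_m (index_enum 'I_m) (fun i => PMeas i (rep s) PFail).
by apply.

Qed.

End Proc.


Section Real.
Variable R : realType.

Lemma real_fin (x w : R) : 0 <= x -> 1 - x <= w -> 0 <= w ->
  1 - 2 * Num.sqrt x <= w.
Proof.
move=> x0 h1 h0; have s0 := sqrtr_ge0 x.
have sx : Num.sqrt x ^+ 2 = x by rewrite sqr_sqrtr.
have [x1|x1] := lerP x 1.
  have s1 : Num.sqrt x <= 1 by rewrite -sqrtr1 ler_wsqrtr.
  have : x <= Num.sqrt x.
    by rewrite -{1}sx expr2; nra.
  by move=> hx; lra.
have s1 : 1 <= Num.sqrt x by rewrite -sqrtr1 ler_wsqrtr // ltW.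
by lra.
Qed.

Lemma sum2 (T : nat) : \sum_(0 <= s < T) (2 * s%:R : R) = T%:R * (T%:R - 1).
Proof.
elim: T => [|T IH]; first by rewrite big_nil mul0r.
rewrite big_nat_recr //= IH -addn1 natrD; ring.
Qed.


Lemma real_final (T m lam tt ww : R) : 0 < T -> 0 < lam -> 0 <= m -> 0 <= ww ->
  lam <= T^-1 * tt -> tt - ww <= m ->
  1 - 2 * Num.sqrt (m / (lam * T)) <= (T^-1 * tt)^-1 / T * ww.
Proof.
move=> T0 l0 m0 w0 hl hw.
have htt : lam * T <= tt by rewrite -ler_pdivlMr // mulrC.
have lT0 : 0 < lam * T by rewrite mulr_gt0.
have tt0 : 0 < tt by apply: lt_le_trans htt.
have -> : (T^-1 * tt)^-1 / T * ww = ww / tt.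
  by field; rewrite ?gt_eqF.
apply: real_fin; first by rewrite divr_ge0 // ltW.
  rewrite ler_pdivlMr //.
  pose u := tt / (lam * T).
  have hu : 1 <= u by rewrite /u ler_pdivlMr // mul1r.
  have hxu : m / (lam * T) * tt = m * u.
    by rewrite /u; field; rewrite !gt_eqF.
  rewrite mulrBl mul1r hxu; nra.
by rewrite divr_ge0 // ltW.
Qed.

End Real.


Local Open Scope complex_scope.
Section Main.
Variable R : realType.
Local Notation C := (R[i]).
Variables (m d : nat) (E : 'I_m -> 'M[C]_d).
Hypothesis hE : forall i, is_measurement (E i).
Hypothesis m0 : (0 < m)%N.
Local Notation sop := (succ_op E).
Local Notation rp := (rep R m).
Local Notation Q := (Qp R m).

Lemma ge0_realC (z : C) : 0 <= z -> exists r : R, z = r%:C /\ 0 <= r.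
Proof.
move=> z0; have /complex_realP [r hr] := ger0_real z0.
by exists r; split => //; rewrite -ler0c -hr.
Qed.

Lemma sopQ T X : (0 < T)%N ->
  sop (Q T) X = T%:R^-1 *: \sum_(0 <= s < T) sop (rp s) X.
Proof.
move=> T0; rewrite /Qp unif_op ?size_map ?size_iota // big_map.
by rewrite /index_iota subn0.
Qed.

Lemma part3 T rho lam i : (0 < T)%N -> is_state rho -> 0 < lam ->
  lam%:C <= succ_prob E (Q T) rho ->
  (1 - 2 * Num.sqrt (m%:R / (lam * T%:R)))%:C
     <= \tr (E i *m succ_state E (Q T) rho).
Proof.
move=> T0 hrho lam0 hlam.
have grho := state_gram hrho.
have tr1 : \tr rho = 1 by case: hrho.
pose Y s := sop (rp s) rho.
have gY s : gram (Y s) by apply: nice_gram => //; apply: rep_nice.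
pose Z := \sum_(0 <= s < T) Y s.
have gZ : gram Z by apply: gram_sum.
have hQ : sop (Q T) rho = T%:R^-1 *: Z by rewrite sopQ.
have htrY s : \sum_j \tr (E j *m Y s) = m%:R * \tr (Y s.+1).
  rewrite /Y rep_shift // tr_rep1 // mulrA mulfV ?mul1r //.
  by rewrite pnatr_eq0 -lt0n.
have hsum : \sum_j \tr ((1%:M - E j) *m Z) = m%:R * (\tr (Y 0%N) - \tr (Y T)).
  have -> : \sum_j \tr ((1%:M - E j) *m Z) = \sum_j (\tr Z - \tr (E j *m Z)).
    by apply: eq_bigr => j _; rewrite mulmxBl mul1mx linearB.
  rewrite sumrB sumr_const card_ord.
  have -> : \sum_j \tr (E j *m Z) = \sum_(0 <= s < T) m%:R * \tr (Y s.+1).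
    rewrite (eq_bigr (fun j => \sum_(0 <= s < T) \tr (E j *m Y s))); last first.
      by move=> j _; rewrite /Z mulmx_sumr raddf_sum.
    by rewrite exchange_big; apply: eq_bigr => s _; rewrite htrY.
  rewrite -mulr_sumr /Z raddf_sum -[_ *+ m]mulr_natl -mulrBr; congr (_ * _).
  have := telescope_sumr (fun s => \tr (Y s)) (leq0n T).
  by rewrite sumrB => h; rewrite -opprB h opprB.
have hi : \tr ((1%:M - E i) *m Z) <= m%:R.
  apply: le_trans (_ : \sum_j \tr ((1%:M - E j) *m Z) <= _).
    rewrite (bigD1 i) //= lerDl; apply: sumr_ge0 => j _.
    by apply: gram_trM_ge0 => //; exact: (meas_gram (hE j)).2.
  rewrite hsum /Y /= tr1 -[X in _ <= X]mulr1; apply: ler_wpM2l => //.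
  by rewrite gerBl; apply: gram_tr_ge0; exact: gY.
have hw0 : 0 <= \tr (E i *m Z).
  by apply: gram_trM_ge0 => //; exact: (meas_gram (hE i)).1.
have ht0 : 0 <= \tr Z by apply: gram_tr_ge0.
have htw : \tr Z - \tr (E i *m Z) <= m%:R.
  by move: hi; rewrite mulmxBl mul1mx linearB.
have hsp : succ_prob E (Q T) rho = T%:R^-1 * \tr Z by rewrite /succ_prob hQ mxtraceZ.
have hss : \tr (E i *m succ_state E (Q T) rho) =
    (T%:R^-1 * \tr Z)^-1 * T%:R^-1 * \tr (E i *m Z).
  by rewrite /succ_state hsp hQ -!scalemxAr !mxtraceZ mulrA.
move: hlam htw; rewrite hsp hss.
have [tt [-> tt0]] := ge0_realC ht0.
have [ww [-> ww0]] := ge0_realC hw0.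
rewrite -!(rmorph_nat (real_complex R)) -!fmorphV -!rmorphM -!fmorphV -!rmorphM -!rmorphB !lecR.
by apply: real_final => //; rewrite ?ltr0n ?ler0n.
Qed.


Section Part2.
Variables (rho : 'M[C]_d) (eps : R).
Hypothesis hrho : is_state rho.
Hypothesis heps : 0 <= eps.
Hypothesis hEr : forall i, (1 - eps)%:C <= \tr (E i *m rho).
Let e : C := (Num.sqrt eps)%:C.

Lemma e_ge0 : 0 <= e.
Proof. by rewrite /e ler0c sqrtr_ge0. Qed.

Lemma e_sq : e ^+ 2 = eps%:C.
Proof. by rewrite /e -rmorphXn sqr_sqrtr. Qed.

Lemma tr_rho : \tr rho = 1.
Proof. by case: hrho. Qed.

Lemma h1E i : \tr ((1%:M - E i) *m rho) <= eps%:C.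
Proof.
have := hEr i; rewrite rmorphB rmorph1 mulmxBl mul1mx linearB /= tr_rho => h.
by rewrite lerBlDr addrC -lerBlDr.
Qed.

Lemma csl (B A : 'M[C]_d) : `|\tr (adj B *m A *m rho)| ^+ 2 <=
  \tr (adj B *m B *m rho) * \tr (adj A *m A *m rho).
Proof.
case: (state_gram hrho) => n [G ->].
have hX (P Q : 'M[C]_d) : \tr (adj P *m Q *m (G *m adj G)) = \tr (adj (P *m G) *m (Q *m G)).
  by rewrite adjM mulmxA mxtrace_mulC !mulmxA.
rewrite !hX; exact: frobCS.
Qed.

Lemma gram_adjM p (P : 'M[C]_(p, d)) : gram (adj P *m P).
Proof. by exists p, (adj P); rewrite adjK. Qed.

Lemma step_a i (K : 'M[C]_d) :
  \tr (adj (psd_sqrt (E i) *m K) *m (psd_sqrt (E i) *m K) *m rho) <=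
  \tr (adj K *m K *m rho).
Proof.
have [hS hSS _] := sqrt_facts (hE i).
rewrite adjM hS !mulmxA -(mulmxA (adj K)) hSS.
have -> : adj K *m E i = adj K - adj K *m (1%:M - E i) by rewrite mulmxBr mulmx1 opprB addrC subrK.
rewrite !mulmxBl !linearB /= gerBl.
have -> : (adj K *m 1%:M - adj K *m E i) *m K *m rho =
    adj K *m ((1%:M - E i) *m (K *m rho)) by rewrite -mulmxBr !mulmxA.
rewrite mxtrace_mulC -mulmxA.
apply: gram_trM_ge0; first exact: (meas_gram (hE i)).2.
by apply: gram_conj; apply: state_gram.
Qed.

Lemma step_b i (K : 'M[C]_d) : \tr (adj K *m K *m rho) <= 1 ->
  `|\tr ((1%:M - psd_sqrt (E i)) *m K *m rho)| <= e.
Proof.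
move=> hK; have [hS hSS hG] := sqrt_facts (hE i).
set S := psd_sqrt (E i) in hS hSS hG *.
have hadj : adj (1%:M - S) = 1%:M - S by rewrite adjB adj1 hS.
have h1 : \tr (adj (1%:M - S) *m (1%:M - S) *m rho) <= eps%:C.
  apply: le_trans (h1E i); rewrite hadj -subr_ge0 -linearB /= -mulmxBl.
  by apply: gram_trM_ge0 => //; apply: state_gram.
have hc := csl (1%:M - S) K; rewrite hadj in hc.
have hx1 : 0 <= \tr ((1%:M - S) *m (1%:M - S) *m rho).
  by rewrite -{1}hadj; apply: gram_trM_ge0; [exact: gram_adjM | exact: state_gram].
have hx2 : 0 <= \tr (adj K *m K *m rho).
  by apply: gram_trM_ge0; [exact: gram_adjM | exact: state_gram].
rewrite hadj in h1.
have h3 := ler_pM hx1 hx2 h1 hK; rewrite mulr1 in h3.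
have h2 := le_trans hc h3.
rewrite -(ler_pXn2r (_ : (0 < 2)%N)) ?nnegrE ?e_ge0 ?normr_ge0 //.
by rewrite e_sq.
Qed.

Lemma claim s : forall (K : 'M[C]_d) (a : C), 0 <= a ->
  \tr (adj K *m K *m rho) <= 1 -> a + s%:R * e <= `|\tr (K *m rho)| ->
  a ^+ 2 <= \tr (sop (rp s) (K *m rho *m adj K)).
Proof.
elim: s => [|s IH] K a a0 hK ha.
  move: ha; rewrite mul0r addr0 => ha /=.
  have h := csl 1%:M K; rewrite adj1 !mul1mx tr_rho mul1r in h.
  apply: le_trans (_ : `|\tr (K *m rho)| ^+ 2 <= _).
    by rewrite (ler_pXn2r (_ : (0 < 2)%N)) ?nnegrE ?normr_ge0.
  apply: (le_trans h).
  have -> : \tr (adj K *m K *m rho) = \tr (K *m rho *m adj K) by rewrite -mulmxA mxtrace_mulC.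
  by [].
rewrite rep_op // linearZ /= raddf_sum /=.
have hi i : a ^+ 2 <= \tr (sop (rp s) (accept_update (E i) (K *m rho *m adj K))).
  have [hS _ _] := sqrt_facts (hE i).
  have -> : accept_update (E i) (K *m rho *m adj K) =
      (psd_sqrt (E i) *m K) *m rho *m adj (psd_sqrt (E i) *m K).
    by rewrite /accept_update adjM hS !mulmxA.
  apply: IH => //; first exact: le_trans (step_a i K) hK.
  have hb := step_b i hK.
  have hsplit : \tr (K *m rho) = \tr (psd_sqrt (E i) *m K *m rho) +
      \tr ((1%:M - psd_sqrt (E i)) *m K *m rho).
    by rewrite -linearD /= -mulmxDl -mulmxDl addrC subrK mul1mx.
  have h : `|\tr (K *m rho)| <= `|\tr (psd_sqrt (E i) *m K *m rho)| + e.
    by rewrite hsplit; apply: le_trans (ler_normD _ _) _; rewrite lerD2l.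
  move: ha; rewrite -addn1 natrD mulrDl mul1r addrA => ha.
  by rewrite -(lerD2r e); exact: le_trans ha h.
have hsum : \sum_(i < m) a ^+ 2 <= \sum_i \tr (sop (rp s) (accept_update (E i) (K *m rho *m adj K))).
  by apply: ler_sum => i _; exact: hi.
rewrite sumr_const card_ord in hsum.
apply: le_trans (ler_wpM2l _ hsum); last by rewrite invr_ge0 ler0n.
by rewrite -(mulr_natr (a ^+ 2) m) mulrCA mulVf ?mulr1 // pnatr_eq0 -lt0n.
Qed.

Lemma trY_lb s : (1 - 2 * s%:R * Num.sqrt eps)%:C <= \tr (sop (rp s) rho).
Proof.
set r := Num.sqrt eps; have r0 : 0 <= r by apply: sqrtr_ge0.
have gY : gram (sop (rp s) rho) by apply: nice_gram => //; [apply: rep_nice | apply: state_gram].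
have hY : sop (rp s) rho = sop (rp s) (1%:M *m rho *m adj 1%:M) by rewrite adj1 mul1mx mulmx1.
case: (lerP (s%:R * r) 1) => hsr.
  have h := @claim s 1%:M ((1 - s%:R * r)%:C).
  rewrite hY; apply: le_trans (h _ _ _).
  - by rewrite -rmorphXn lecR; nra.
  - by rewrite ler0c subr_ge0.
  - by rewrite adj1 !mul1mx tr_rho.
  rewrite mul1mx tr_rho normr1 /e -(rmorph_nat (real_complex R)) -rmorphM -rmorphD.
  by rewrite subrK rmorph1.
apply: le_trans (gram_tr_ge0 gY).
by rewrite -(rmorph0 (real_complex R)) lecR; lra.
Qed.

Lemma part2_main T : (0 < T)%N ->
  (1 - T%:R * Num.sqrt eps)%:C <= succ_prob E (Q T) rho.
Proof.
move=> T0; set r := Num.sqrt eps; have r0 : 0 <= r by apply: sqrtr_ge0.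
rewrite /succ_prob sopQ // mxtraceZ raddf_sum.
have hs : \sum_(0 <= s < T) (1 - 2 * s%:R * r)%:C <= \sum_(0 <= s < T) \tr (sop (rp s) rho).
  by apply: ler_sum => s _; exact: trY_lb.
apply: le_trans (ler_wpM2l _ hs); last by rewrite invr_ge0 ler0n.
rewrite -rmorph_sum -(rmorph_nat (real_complex R)) -fmorphV -rmorphM lecR.
rewrite sumrB sumr_const_nat subn0 -mulr_suml sum2.
have hT : (0 : R) < T%:R by rewrite ltr0n.
have -> : T%:R^-1 * (1 *+ T - T%:R * (T%:R - 1) * r) = 1 - (T%:R - 1) * r.
  by rewrite -[1 *+ T]/(T%:R); field; rewrite gt_eqF.
nra.
Qed.

End Part2.

End Main.

Theorem lemma22 (R : realType) (d m : nat) (E : 'I_m -> 'M[R[i]]_d)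
    (T : nat) :
  (forall i, is_measurement (E i)) -> (0 < T)%N ->
  exists Q : proc R m,
    [/\ proc_wf Q, (num_meas Q <= T)%N,
     (forall (rho : 'M[R[i]]_d) (eps : R),
        is_state rho -> 0 <= eps ->
        (forall i, (1 - eps)%:C <= \tr (E i *m rho)) ->
        (1 - T%:R * Num.sqrt eps)%:C <= succ_prob E Q rho) &
     (forall (rho : 'M[R[i]]_d) (lam : R),
        is_state rho -> 0 < lam -> lam%:C <= succ_prob E Q rho ->
        forall i, (1 - 2 * Num.sqrt (m%:R / (lam * T%:R)))%:C
                  <= \tr (E i *m succ_state E Q rho))].
Proof.
move=> hE T0.
case: (posnP m) => [m0|m0].
  subst m; exists PSucc; split => //.
    move=> rho eps hrho heps _; rewrite /succ_prob /=.
    case: hrho => _ ->; rewrite -(rmorph1 (real_complex R)) lecR gerBl.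
    by rewrite mulr_ge0 ?ler0n ?sqrtr_ge0.
  by move=> rho lam _ _ _ [].
exists (Qp R m T); split.
- by apply: unif_wf => s; apply: rep_wf.
- apply: unif_meas => s; rewrite mem_iota add0n => /andP[_ hs].
  by apply: leq_trans (rep_meas _ _ s) (ltnW hs).
- by move=> rho eps hrho heps hEr; apply: part2_main.
- by move=> rho lam hrho hlam hl i; apply: part3.
Qed.
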